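(* Let $(v_i)_{i\in N}$ be a typical profile, let all agents report truthfully ($\hat v_i=v_i$), and let $b$ and $x$ be the bids and fractional allocation computed by the PRD Mechanism. Then for all agents $i\neq k$, $$fEM_{ik}:=\sum_{j\in M}\bar v_{ij}\,(x_{ij}-x_{kj})=\frac{1}{nC}\sum_{j\in M}\bar v_{ij}\big(\log b_{ij}-\log b_{kj}\big)\;\ge\;\frac{\delta^2}{4nC},$$ where $\bar v_{ij}=v_{ij}/\sum_{j'}v_{ij'}$.
   Context: Setting (random model). There are $n$ agents $N=\{1,\dots,n\}$ and $m$ items $M=\{1,\dots,m\}$. Agent $i$ has an additive valuation given by a vector $v_i\in[0,1]^m$, so $v_i(S)=\sum_{j\in S}v_{ij}$. For each item $j$, the vector $(v_{1j},\dots,v_{nj})$ is drawn from a joint distribution $\mathcal D$ on $[0,1]^n$, independently across items (values of different agents for the same item may be correlated). Let $\mu_i$ be the mean of the marginal distribution of agent $i$. Standing assumptions: there are constants $\mu_l>0$ and $\delta\in(0,1)$, independent of $n$ and $m$, such that $\mu_i\ge \mu_l$ for all $i$, and $\mathbb E\big[\,|v_{ij}/\mu_i-v_{kj}/\mu_k|\,\big]\ge\delta$ for all $i\ne k$. Typicality: for a fixed constant $\varepsilon\in(0,\delta/25)$, a profile $(v_i)_{i\in N}$ is typical if (T1) for all $i$, $\sum_j v_{ij}\in[(1-\varepsilon)m\mu_i,(1+\varepsilon)m\mu_i]$, and (T2) for all $i\neq k$, $\sum_j |v_{ij}/\mu_i-v_{kj}/\mu_k|\ge(1-\varepsilon)\delta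 m$. PRD Mechanism. Parameters: $l:=\delta/25$, $b_{\min}:=l/m$, $b_{\max}:=2/(\mu_l m)$, $c:=-\log(l/m)$, $C:=\log\big(2/(\mu_l l)\big)$ (natural logarithms). Each agent $i$ reports a vector $\hat v_i\in[0,1]^m$ with $\sum_j\hat v_{ij}>0$. Bid construction: let $\bar v_{ij}:=\hat v_{ij}/\sum_{j'}\hat v_{ij'}$; for $s\ge 0$ let $b_{ij}(s):=\min\{\max\{s\bar v_{ij},b_{\min}\},b_{\max}\}$ and $h_i(s):=\sum_j b_{ij}(s)$ (a continuous nondecreasing function with $h_i(0)=l<1$). If $\sup_{s\ge0}h_i(s)\ge1$, pick $s_i\ge0$ with $h_i(s_i)=1$ (a scale factor) and set $b_{ij}:=b_{ij}(s_i)$. Otherwise set $b_{ij}:=b_{\max}$ for every $j$ with $\hat v_{ij}>0$ and choose the remaining $b_{ij}\in[b_{\min},b_{\max}]$ arbitrarily so that $\sum_j b_{ij}=1$. Fractional allocation: $x_{ij}:=\frac{\log b_{ij}+c}{nC}+\frac{nC-\sum_{k\in N}(\log b_{kj}+c)}{n^2C}$ (so $x_{ij}\in[0,1]$ and $\sum_i x_{ij}=1$). Rounding: each item $j$ is independently assigned to exactly one agent, to agent $i$ with probability $x_{ij}$; $A_i$ denotes the set of items agent $i$ receives. *)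

(* Defs.v *)
From HB Require Import structures.
From mathcomp Require Import all_boot all_order all_algebra.
From mathcomp Require Import reals exp.
Set Implicit Arguments. Unset Strict Implicit. Unset Printing Implicit Defensive.
Import Order.TTheory GRing.Theory Num.Theory.
Local Open Scope ring_scope.

Section PRD.
Variable R : realType.
Variables (n m : nat).

Definition vbar (v : 'I_n -> 'I_m -> R) (i : 'I_n) (j : 'I_m) : R :=
  v i j / \sum_(j' < m) v i j'.

Definition prd_l (delta : R) : R := delta / 25.
Definition prd_bmin (delta : R) : R := prd_l delta / m%:R.
Definition prd_bmax (mul : R) : R := 2 / (mul * m%:R).
Definition prd_c (delta : R) : R := - ln (prd_l delta / m%:R).
Definition prd_C (delta mul : R) : R := ln (2 / (mul * prd_l delta)).

Definition bid_s (delta mul : R) (vhat : 'I_n -> 'I_m -> R) (i : 'I_n) (s : R)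
  (j : 'I_m) : R :=
  Num.min (Num.max (s * vbar vhat i j) (prd_bmin delta)) (prd_bmax mul).

Definition h_s (delta mul : R) (vhat : 'I_n -> 'I_m -> R) (i : 'I_n) (s : R) : R :=
  \sum_(j < m) bid_s delta mul vhat i s j.

(* sup_{s >= 0} h_i(s) >= 1, written literally via the definition of sup *)
Definition sup_h_ge1 (delta mul : R) (vhat : 'I_n -> 'I_m -> R) (i : 'I_n) : Prop :=
  forall e : R, 0 < e -> exists s : R, 0 <= s /\ 1 - e < h_s delta mul vhat i s.

(* b is a bid matrix that the PRD bid construction can output on reports vhat
   (the construction involves choices, so it is a relation) *)
Definition PRD_bids (delta mul : R) (vhat : 'I_n -> 'I_m -> R)
  (b : 'I_n -> 'I_m -> R) : Prop :=
  forall i : 'I_n,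
    (sup_h_ge1 delta mul vhat i /\
       exists s : R, 0 <= s /\ h_s delta mul vhat i s = 1 /\
         forall j, b i j = bid_s delta mul vhat i s j)
    \/
    (~ sup_h_ge1 delta mul vhat i /\
       (forall j, 0 < vhat i j -> b i j = prd_bmax mul) /\
       (forall j, prd_bmin delta <= b i j <= prd_bmax mul) /\
       \sum_(j < m) b i j = 1).

Definition prd_x (delta mul : R) (b : 'I_n -> 'I_m -> R) (i : 'I_n) (j : 'I_m) : R :=
  (ln (b i j) + prd_c delta) / (n%:R * prd_C delta mul)
  + (n%:R * prd_C delta mul - \sum_(k < n) (ln (b k j) + prd_c delta))
      / (n%:R ^+ 2 * prd_C delta mul).

Definition typical (mu : 'I_n -> R) (delta eps : R) (v : 'I_n -> 'I_m -> R) : Prop :=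
  (forall i : 'I_n,
     (1 - eps) * m%:R * mu i <= \sum_(j < m) v i j <= (1 + eps) * m%:R * mu i)
  /\
  (forall i k : 'I_n, i != k ->
     (1 - eps) * delta * m%:R <= \sum_(j < m) `|v i j / mu i - v k j / mu k|).

End PRD.

(* Main.v *)
Require Import Defs.
From HB Require Import structures.
From mathcomp Require Import all_boot all_order all_algebra.
From mathcomp Require Import reals exp.
From mathcomp Require Import all_classical all_reals all_analysis.
From mathcomp Require Import ring lra.
Import Order.TTheory GRing.Theory Num.Theory.
Import numFieldNormedType.Exports.
Local Open Scope ring_scope.

Section Calc.
Local Open Scope classical_set_scope.
Local Open Scope ring_scope.
Lemma mvt_h {R : realType} (f df : R -> R) (a b : R) : 0 < a -> a < b ->
  (forall x : R, 0 < x -> is_derive x 1 f (df x)) ->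
  exists2 c : R, a < c < b & f b - f a = df c * (b - a).
Proof.
move=> a0 ab hd.
have hd' : forall x, x \in `]a, b[ -> is_derive x 1 f (df x).
  move=> x; rewrite in_itv /= => /andP[ax _]; apply: hd; lra.
have hc : {within `[a, b], continuous f}.
  apply: derivable_within_continuous => x; rewrite in_itv /= => /andP[ax _].
  apply: ex_derive; apply: hd; lra.
have [c cab ->] := @MVT R f df a b ab hd' hc.
by exists c => //; move: cab; rewrite in_itv.
Qed.

Lemma ln_ge_1V {R : realType} (t : R) : 0 < t -> 1 - t^-1 <= ln t.
Proof.
move=> t0.
have h := @le_ln1Dx R (t^-1 - 1).
have : ln (1 + (t^-1 - 1)) <= t^-1 - 1.
  apply: h; have : 0 < t^-1 by rewrite invr_gt0. lra.
rewrite addrC subrK lnV ?posrE //; lra.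
Qed.

Lemma dH1 {R : realType} (x : R) : 0 < x ->
  is_derive x 1 (fun t : R => (4*t+4) * ln t - 8*t + 8) (4 * ln x + (4*x+4)/x - 8).
Proof.
move=> x0; have h1 := is_derive1_ln x0.
apply: is_derive_eq; rewrite /GRing.scale /=; ring.
Qed.

Lemma dH {R : realType} (x : R) : 0 < x ->
  is_derive x 1 (fun t : R => 2*t*(t+2) * ln t - (t-1)*(5*t+1)) ((4*x+4) * ln x - 8*x + 8).
Proof.
move=> x0; have h1 := is_derive1_ln x0.
apply: is_derive_eq; rewrite /GRing.scale /=; field; lra.
Qed.

Lemma Hp_sign {R : realType} (t : R) : 0 < t -> (t - 1) * ((4*t+4) * ln t - 8*t + 8) >= 0.
Proof.
move=> t0.
have d2 : forall c : R, 0 < c -> 0 <= 4 * ln c + (4*c+4)/c - 8.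
  move=> c c0; have := @ln_ge_1V R c c0.
  have -> : (4*c+4)/c = 4 + 4 * c^-1 by field; lra.
  lra.
case: (ltgtP t 1) => [t1|t1|->]; last by rewrite subrr mul0r.
- have [c /andP[c1 c2] e] := @mvt_h R _ _ t 1 t0 t1 (@dH1 R).
  move: e; rewrite ln1 => e.
  have := d2 c (lt_trans t0 c1).
  move: e; generalize (4 * ln c + (4 * c + 4) / c - 8) (ln t) => D L e hD.
  have -> : (4*t+4)*L - 8*t+8 = -(D*(1-t)) by lra.
  have := mulr_ge0 hD (sqr_ge0 (1-t)); nra.
- have [c /andP[c1 c2] e] := @mvt_h R _ _ 1 t ltr01 t1 (@dH1 R).
  move: e; rewrite ln1 => e.
  have := d2 c (lt_trans ltr01 c1).
  move: e; generalize (4 * ln c + (4 * c + 4) / c - 8) (ln t) => D L e hD.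
  have -> : (4*t+4)*L - 8*t+8 = D*(t-1) by lra.
  have := mulr_ge0 hD (sqr_ge0 (t-1)); nra.
Qed.

Lemma H_ge0 {R : realType} (t : R) : 0 < t -> (t-1)*(5*t+1) <= 2*t*(t+2) * ln t.
Proof.
move=> t0.
case: (ltgtP t 1) => [t1|t1|->]; last by rewrite ln1; lra.
- have [c /andP[c1 c2] e] := @mvt_h R _ _ t 1 t0 t1 (@dH R).
  move: e; rewrite ln1 => e.
  have := @Hp_sign R c (lt_trans t0 c1).
  move: e; generalize ((4 * c + 4) * ln c - 8 * c + 8) (ln t) => D L e hD.
  have hD' : D <= 0.
    rewrite leNgt; apply/negP => Dp.
    have : (c - 1) * D < 0 by rewrite nmulr_rlt0 //; lra.
    lra.
  have : 0 <= (-D) * (1 - t) by apply: mulr_ge0; lra.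
  nra.
- have [c /andP[c1 c2] e] := @mvt_h R _ _ 1 t ltr01 t1 (@dH R).
  move: e; rewrite ln1 => e.
  have := @Hp_sign R c (lt_trans ltr01 c1).
  move: e; generalize ((4 * c + 4) * ln c - 8 * c + 8) (ln t) => D L e hD.
  have hD' : 0 <= D.
    rewrite leNgt; apply/negP => Dp.
    have : (c - 1) * D < 0 by rewrite nmulr_llt0 //; lra.
    lra.
  have : 0 <= D * (t - 1) by apply: mulr_ge0; lra.
  nra.
Qed.

Lemma term_bound {R : realType} (x y L : R) : 0 < x -> 0 < y ->
  L * `|x - y| - L^+2 * (x + 2*y) / 6 + x - y <= x * (ln x - ln y).
Proof.
move=> x0 y0.
set t := x / y.
have t0 : 0 < t by rewrite divr_gt0.
have xe : x = t * y by rewrite /t mulrVK // unitfE gt_eqF.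
have hl : ln x - ln y = ln t by rewrite /t ln_div ?posrE.
rewrite hl.
have H := @H_ge0 R t t0.
have ad : `|x - y| = y * `|t - 1|.
  by rewrite xe -{2}(mul1r y) -mulrBl normrM mulrC gtr0_norm.
rewrite ad xe.
move: H; generalize (ln t) => A H.
set d := `|t - 1|.
have d2 : d ^+ 2 = (t - 1) ^+ 2 by rewrite /d real_normK // num_real.
have dge : 0 <= d by apply: normr_ge0.
have key : (t-1) + L * d - L^+2 * (t + 2) / 6 <= t * A.
  have c0 : 0 < t + 2 by lra.
  have h1 : (t - 1) * (5 * t + 1) / (2 * (t + 2)) <= t * A.
    rewrite ler_pdivrMr; last lra.
    nra.
  apply: le_trans h1; rewrite -subr_ge0.
  have -> : (t - 1) * (5 * t + 1) / (2 * (t + 2)) - ((t-1) + L * d - L^+2 * (t + 2) / 6)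
     = (9 * d^+2 - 6 * L * d * (t + 2) + L^+2 * (t+2)^+2) / (6 * (t + 2)).
    rewrite d2; field; lra.
  apply: divr_ge0; last lra.
  have := sqr_ge0 (3 * d - L * (t + 2)); nra.
have := ler_wpM2r (ltW y0) key.
nra.
Qed.

End Calc.

Lemma pinsker {R : realType} (m : nat) (r q : 'I_m -> R) :
  (forall j, 0 < r j) -> (forall j, 0 < q j) ->
  \sum_(j < m) r j = 1 -> \sum_(j < m) q j = 1 ->
  (\sum_(j < m) `|r j - q j|)^+2 / 2 <= \sum_(j < m) r j * (ln (r j) - ln (q j)).
Proof.
move=> rp qp hr hq.
set L := \sum_(j < m) `|r j - q j|.
apply: le_trans (ler_sum _ (fun j _ => @term_bound R (r j) (q j) L (rp j) (qp j))).
rewrite sumrB big_split /= sumrB -mulr_suml -mulr_sumr -mulr_sumr big_split /= -mulr_sumr hr hq -/L.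
lra.
Qed.

Lemma mulle {R : realType} (x y z : R) : 0 <= x -> y <= z -> y * x <= z * x.
Proof. by move=> h1 h2; exact: ler_wpM2r h1 _ _ h2. Qed.

Lemma agent_struct {R : realType} (n m : nat) (mu : 'I_n -> R) (mul delta eps : R)
  (v b : 'I_n -> 'I_m -> R) (a : 'I_n) :
  (0 < m)%N -> 0 < mul -> mul <= mu a <= 1 -> 0 < delta < 1 -> 0 < eps < delta / 25 ->
  (forall j, 0 <= v a j <= 1) ->
  (1 - eps) * m%:R * mu a <= \sum_(j < m) v a j <= (1 + eps) * m%:R * mu a ->
  PRD_bids delta mul v b ->
  exists s : R, [/\ 0 < s, s <= 1, 1 - s <= prd_l delta,
     (forall j, b a j = Num.max (s * vbar v a j) (prd_bmin m delta)) &
     \sum_(j < m) b a j = 1] /\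
     \sum_(j < m) `|b a j - vbar v a j| <= 2 * prd_l delta.
Proof.
move=> m0 mul0 /andP[mula mua1] /andP[d0 d1] /andP[e0 e1] v01 /andP[S1 S2] hb.
set S := \sum_(j < m) v a j in S1 S2.
have mR : 0 < m%:R :> R by rewrite ltr0n.
have mua0 : 0 < mu a by lra.
have hS : (24/25) * (m%:R * mul) <= S.
  have h1 : (24/25) * mul <= (1 - eps) * mu a by nra.
  have : m%:R * ((1 - eps) * mu a) <= S.
    by rewrite (_ : m%:R * ((1 - eps) * mu a) = (1-eps) * m%:R * mu a) //; ring.
  have : m%:R * ((24/25) * mul) <= m%:R * ((1 - eps) * mu a).
    by rewrite ler_pM2l.
  nra.
have S0 : 0 < S by have := mulr_gt0 mR mul0; lra.
have pE : forall j, vbar v a j = v a j / S by [].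
have psum : \sum_(j < m) vbar v a j = 1.
  by rewrite -mulr_suml -/S divff // gt_eqF.
have p0 : forall j, 0 <= vbar v a j.
  by move=> j; rewrite pE divr_ge0 //; [case/andP: (v01 j)| lra].
have p1 : forall j, vbar v a j <= S^-1.
  move=> j; rewrite pE ler_pdivrMr // mulVf ?gt_eqF //; by case/andP: (v01 j).
set bmin := prd_bmin m delta.
set bmax := prd_bmax m mul.
have bminE : bmin * m%:R = prd_l delta.
  by rewrite /bmin /prd_bmin mulfVK // gt_eqF.
have bmin0 : 0 < bmin by rewrite /bmin /prd_bmin /prd_l divr_gt0 // divr_gt0.
have Sbmax : 3/2 <= bmax * S.
  rewrite /bmax /prd_bmax mulrAC ler_pdivlMr ?mulr_gt0 //; nra.
have pbmax : forall j, (3/2) * vbar v a j <= bmax.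
  move=> j; have := p1 j; have := p0 j => h0 h1.
  have : (3/2) * vbar v a j <= (3/2) * S^-1 by nra.
  move/le_trans; apply.
  rewrite -(ler_pM2r S0) mulrVK ?unitfE ?gt_eqF //; lra.
have mul1 : mul <= 1 by lra.
have bmaxE : bmax * m%:R = 2 / mul.
  rewrite /bmax /prd_bmax; field; lra.
have bmm : bmin <= bmax.
  rewrite -(ler_pM2r mR) bminE bmaxE /prd_l ler_pdivlMr //.
  nra.
have sup : sup_h_ge1 delta mul v a.
  move=> e ep; exists (bmax * S); split.
    by apply: mulr_ge0; lra.
  apply: (@lt_le_trans _ _ 1); first lra.
  apply: le_trans (ltW (lt_le_trans _ Sbmax)) _; first lra.
  rewrite [X in X <= _](_ : _ = \sum_(j < m) bmax * v a j); last by rewrite mulr_sumr.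
  rewrite /h_s; apply: ler_sum => j _.
  rewrite /bid_s -/bmin -/bmax pE.
  have -> : bmax * S * (v a j / S) = bmax * v a j by field; lra.
  case/andP: (v01 j) => v0 v1.
  rewrite le_min le_max lexx /=.
  have bmax0 : 0 < bmax by lra.
  by rewrite -[X in _ <= X]mulr1 ler_pM2l.
case: (hb a) => [[_ [s [s0 [hs hbs]]]] | [nsup _]]; last by exfalso; exact: nsup.
have s1 : s <= 1.
  rewrite leNgt; apply/negP => s1.
  set t := Num.min s (3/2).
  have t1 : 1 < t by rewrite lt_min s1 /=; lra.
  have : t <= 1.
    rewrite -hs /h_s -[t]mulr1 -psum mulr_sumr; apply: ler_sum => j _.
    rewrite /bid_s -/bmin -/bmax le_min le_max; apply/andP; split.
      by apply/orP; left; apply: mulle (p0 j) _; rewrite ge_min lexx.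
    apply: le_trans (pbmax j); apply: mulle (p0 j) _; rewrite ge_min lexx orbT //.
  lra.
have bE : forall j, b a j = Num.max (s * vbar v a j) bmin.
  move=> j; rewrite hbs /bid_s -/bmin -/bmax min_l // ge_max bmm andbT.
  apply: le_trans (pbmax j); apply: mulle (p0 j) _; lra.
have bsum : \sum_(j < m) b a j = 1.
  by rewrite -hs /h_s; apply: eq_bigr => j _.
have ls : 1 <= s + prd_l delta.
  rewrite -{1}bsum -bminE (eq_bigr _ (fun j _ => bE j)).
  have hle : forall j, Num.max (s * vbar v a j) bmin <= s * vbar v a j + bmin.
    move=> j; rewrite ge_max; apply/andP; split.
      by rewrite lerDl; lra.
    by rewrite lerDr; apply: mulr_ge0 => //; exact: p0 j.
  apply: le_trans (ler_sum _ (fun j _ => hle j)) _.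
  by rewrite big_split /= -mulr_sumr psum mulr1 sumr_const card_ord mulr_natr.
have l1 : prd_l delta < 1 by rewrite /prd_l; lra.
exists s; split; first by split => //; lra.
have hj : forall j, `|b a j - vbar v a j| <= (1 - s) * vbar v a j + (b a j - s * vbar v a j).
  move=> j; rewrite bE; have := p0 j => pj.
  case: (leP bmin (s * vbar v a j)) => h.
    have -> : s * vbar v a j - vbar v a j = - ((1 - s) * vbar v a j) by ring.
    rewrite normrN ger0_norm; last by apply: mulr_ge0; lra.
    lra.
  rewrite ler_norml; apply/andP; split.
    have : 0 <= s * vbar v a j by apply: mulr_ge0; lra.
    nra.
  nra.
apply: le_trans (ler_sum _ (fun j _ => hj j)) _.
rewrite big_split /= sumrB -!mulr_sumr psum bsum !mulr1.
lra.
Qed.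

Lemma norm3 {R : realType} (a b c d : R) : a = b + c + d -> `|a| <= `|b| + `|c| + `|d|.
Proof.
move=> ->; apply: le_trans (ler_normD _ _) _; rewrite lerD2r; exact: ler_normD.
Qed.

Lemma alpha_bound {R : realType} (S M eps : R) : 0 < M -> 0 < S ->
  (1 - eps) * M <= S <= (1 + eps) * M -> S * `|S^-1 - M^-1| <= eps.
Proof.
move=> M0 S0 /andP[h1 h2].
have -> : S * `|S^-1 - M^-1| = `|1 - S / M|.
  rewrite -{1}(ger0_norm (ltW S0)) -normrM.
  by congr `|_|; field; apply/andP; split; rewrite gt_eqF.
have q1 : S / M <= 1 + eps by rewrite ler_pdivrMr.
have q2 : 1 - eps <= S / M by rewrite ler_pdivlMr.
rewrite ler_norml; apply/andP; split; lra.
Qed.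

Theorem mainTheorem4 (R : realType) (n m : nat) (mu : 'I_n -> R) (mul delta eps : R)
  (v : 'I_n -> 'I_m -> R) (b : 'I_n -> 'I_m -> R) :
  (0 < m)%N ->
  0 < mul ->
  (forall i, mul <= mu i <= 1) ->
  0 < delta < 1 ->
  0 < eps < delta / 25 ->
  (forall i j, 0 <= v i j <= 1) ->
  typical mu delta eps v ->
  PRD_bids delta mul v b ->
  forall i k : 'I_n, i != k ->
    let fEM := \sum_(j < m) vbar v i j * (prd_x delta mul b i j - prd_x delta mul b k j) in
    fEM = 1 / (n%:R * prd_C delta mul)
            * \sum_(j < m) vbar v i j * (ln (b i j) - ln (b k j))
    /\ delta ^+ 2 / (4 * n%:R * prd_C delta mul) <= fEM.
Proof.
move=> m0 mul0 hmu hd he hv [T1 T2] hb i k ik fEM.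
have hid : fEM = 1 / (n%:R * prd_C delta mul)
            * \sum_(j < m) vbar v i j * (ln (b i j) - ln (b k j)).
  by rewrite /fEM mulr_sumr; apply: eq_bigr => j _; rewrite /prd_x; ring.
split => //; rewrite hid.
have /andP[d0 d1] := hd; have /andP[e0 e1] := he.
have [s [[si0 si1 sil bEi bsi] Li]] :=
  @agent_struct R n m mu mul delta eps v b i m0 mul0 (hmu i) hd he (fun j => hv i j) (T1 i) hb.
have [s' [[sk0 sk1 skl bEk bsk] Lk]] :=
  @agent_struct R n m mu mul delta eps v b k m0 mul0 (hmu k) hd he (fun j => hv k j) (T1 k) hb.
set bmin := prd_bmin m delta in bEi bEk.
have mR : 0 < m%:R :> R by rewrite ltr0n.
have bmin0 : 0 < bmin by rewrite /bmin /prd_bmin /prd_l divr_gt0 // divr_gt0.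
have ri : forall j, bmin <= b i j by move=> j; rewrite bEi le_max lexx orbT.
have rk : forall j, bmin <= b k j by move=> j; rewrite bEk le_max lexx orbT.
have ri0 : forall j, 0 < b i j by move=> j; exact: lt_le_trans bmin0 (ri j).
have rk0 : forall j, 0 < b k j by move=> j; exact: lt_le_trans bmin0 (rk j).
have n0 : (0 < n)%N by apply: leq_ltn_trans (leq0n i) (ltn_ord i).
have nR : 0 < n%:R :> R by rewrite ltr0n.
have /andP[mul1 _] := hmu i; have /andP[_ mu1] := hmu i.
have C0 : 0 < prd_C delta mul.
  rewrite /prd_C /prd_l; apply: ln_gt0.
  rewrite ltr_pdivlMr; last by apply: mulr_gt0 => //; lra.
  nra.
set NC := n%:R * prd_C delta mul.
have NC0 : 0 < NC by apply: mulr_gt0.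
set X := \sum_(j < m) vbar v i j * (ln (b i j) - ln (b k j)).
set K := \sum_(j < m) b i j * (ln (b i j) - ln (b k j)).
set L := \sum_(j < m) `|b i j - b k j|.
have pin : L ^+ 2 / 2 <= K by apply: pinsker.
have hterm : forall j, s^-1 * (b i j * (ln (b i j) - ln (b k j)))
                       <= vbar v i j * (ln (b i j) - ln (b k j)).
  move=> j; have rkj := rk j; have rk0j := rk0 j.
  rewrite bEi; case: (leP bmin (s * vbar v i j)) => h.
    by rewrite mulrA mulrA mulVf ?mul1r // gt_eqF.
  have D0 : ln bmin - ln (b k j) <= 0.
    by rewrite subr_le0 ler_ln ?posrE.
  have hp : vbar v i j <= s^-1 * bmin.
    by rewrite ler_pdivlMl //; exact: ltW.
  move: D0 hp; generalize (ln bmin - ln (b k j)) => D D0 hp.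
  rewrite mulrA; nra.
have XK : s^-1 * K <= X.
  by rewrite /K mulr_sumr; apply: ler_sum => j _; exact: hterm.
have K0 : 0 <= K by apply: le_trans pin; apply: divr_ge0 => //; exact: sqr_ge0.
have sK : K <= s^-1 * K.
  by rewrite ler_peMl // invf_ge1.
set PP := \sum_(j < m) `|vbar v i j - vbar v k j|.
have PPL : PP <= \sum_(j < m) `|b i j - vbar v i j| + L + \sum_(j < m) `|b k j - vbar v k j|.
  rewrite /L -!big_split /=; apply: ler_sum => j _.
  rewrite (distrC (b i j)); apply: norm3; ring.
set Si := \sum_(j < m) v i j.
set Sk := \sum_(j < m) v k j.
have /andP[Si1 Si2] := T1 i; have /andP[Sk1 Sk2] := T1 k.
have /andP[muil _] := hmu i; have /andP[mukl _] := hmu k.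
have mui0 : 0 < mu i by lra.
have muk0 : 0 < mu k by lra.
have Si0 : 0 < Si.
  apply: lt_le_trans Si1; rewrite mulr_gt0 // mulr_gt0 //; lra.
have Sk0 : 0 < Sk.
  apply: lt_le_trans Sk1; rewrite mulr_gt0 // mulr_gt0 //; lra.
set ai := Si^-1 - (m%:R * mu i)^-1.
set ak := Sk^-1 - (m%:R * mu k)^-1.
have hai : Si * `|ai| <= eps.
  by apply: alpha_bound; rewrite ?mulr_gt0 // !mulrA Si1 Si2.
have hak : Sk * `|ak| <= eps.
  by apply: alpha_bound; rewrite ?mulr_gt0 // !mulrA Sk1 Sk2.
have hU : \sum_(j < m) `|m%:R^-1 * (v i j / mu i - v k j / mu k)|
           <= PP + Si * `|ai| + Sk * `|ak|.
  rewrite /Si /Sk !mulr_suml -!big_split /=; apply: ler_sum => j _.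
  have /andP[vi0 _] := hv i j; have /andP[vk0 _] := hv k j.
  have := @norm3 R (m%:R^-1 * (v i j / mu i - v k j / mu k)) (vbar v i j - vbar v k j)
     (- (v i j * ai)) (v k j * ak).
  rewrite normrN !normrM (ger0_norm vi0) (ger0_norm vk0); apply.
  rewrite /ai /ak /vbar -/Si -/Sk.
  field; rewrite !gt_eqF //.
have hU2 : \sum_(j < m) `|m%:R^-1 * (v i j / mu i - v k j / mu k)|
           = m%:R^-1 * \sum_(j < m) `|v i j / mu i - v k j / mu k|.
  rewrite mulr_sumr; apply: eq_bigr => j _.
  by rewrite normrM ger0_norm // invr_ge0 ltW.
have hT2 := T2 i k ik.
have hU3 : (1 - eps) * delta <= m%:R^-1 * \sum_(j < m) `|v i j / mu i - v k j / mu k|.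
  by rewrite ler_pdivlMl // mulrC.
have Lb : 18 / 25 * delta <= L.
  have ed : eps * delta <= eps by nra.
  rewrite /prd_l in Li Lk.
  have h1 : (1-eps)*delta <= PP + Si * `|ai| + Sk * `|ak|.
    by apply: le_trans hU3 _; rewrite -hU2.
  move: h1 hai hak PPL Li Lk ed e1 d0.
  generalize (Si * `|ai|) (Sk * `|ak|) PP L (\sum_(j < m) `|b i j - vbar v i j|)
    (\sum_(j < m) `|b k j - vbar v k j|).
  move=> A1 A2 P0 L0 B1 B2; lra.
have X4 : delta ^+ 2 / 4 <= X.
  have L2 : (18 / 25 * delta) ^+ 2 <= L ^+ 2.
    by rewrite ler_sqr ?nnegrE; lra.
  move: L2 pin; rewrite -/K; generalize (L ^+ 2) => L2 h1 h2.
  have : (18 / 25 * delta) ^+ 2 = 324 / 625 * delta ^+ 2 by field.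
  have := sqr_ge0 delta.
  lra.
rewrite (_ : delta ^+ 2 / (4 * n%:R * prd_C delta mul) = 1 / NC * (delta ^+ 2 / 4)).
  by rewrite ler_pM2l // divr_gt0.
rewrite /NC; field; rewrite !gt_eqF //.
Qed.
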